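(* Let $\alpha,\beta>0$, let $g(n)=c_0$ be constant, and let $x$ be a sequence (with given $x(1)$) satisfying $x(n)=\alpha\,x(\lfloor n/2\rfloor)+\beta\,x(\lceil n/2\rceil)+g(n)$ for $n\ge2$. Let $d_0\coloneqq(1-\beta)x(1)-g(1)+g(0)$ and $d_1\coloneqq g(1)-(1-\beta)x(1)$. Then, as $n\to\infty$, with a suitable $1$-periodic continuous function $\Phi$: (1) If $d_0=d_1=0$, then $x(n)=n^{\log_2(\alpha+\beta)}\Phi(\{\log_2n\})$ (exactly, with no error term). (2a) If $d_0\ne0$ or $d_1\ne0$, and $\alpha+\beta>1$, then for every $\varepsilon>0$, $x(n)=n^{\log_2(\alpha+\beta)}\Phi(\{\log_2n\})+O\big(n^{\log_2\max\{\alpha,\beta,1\}+[\max\{\alpha,\beta\}=1]\varepsilon}(\log n)^{[\max\{\alpha,\beta\}<1]}\big)$. (2b) If $d_0\ne0$ or $d_1\ne0$, and $\alpha+\beta\le1$, then $x(n)=O\big((\log n)^{[\alpha+\beta=1\text{ and }d_0+d_1\ne0]}\big)$.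
   Context: $\{z\}=z-\lfloor z\rfloor$ denotes the fractional part. Iverson's bracket: $[S]=1$ if $S$ is true and $0$ otherwise. Here $g(0)=g(1)=c_0$. *)

(* Defs.v *)
From Stdlib Require Export Reals ClassicalDescription.
Open Scope R_scope.

Definition log2 (x : R) : R := ln x / ln 2.

(* fractional part {z} = z - floor z  (Stdlib: Int_part = floor) *)
Definition frac (z : R) : R := frac_part z.

Definition iverson (P : Prop) : R :=
  if excluded_middle_informative P then 1 else 0.

Definition ivpow (y : R) (P : Prop) : R :=
  if excluded_middle_informative P then y else 1.

Definition bigO (f h : nat -> R) : Prop :=
  exists C : R, exists N : nat, forall n : nat, (N <= n)%nat -> Rabs (f n) <= C * Rabs (h n).

Definition eventually_nat (P : nat -> Prop) : Prop :=
  exists N : nat, forall n : nat, (N <= n)%nat -> P n.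

Definition periodic1_continuous (Phi : R -> R) : Prop :=
  continuity Phi /\ forall t : R, Phi (t + 1) = Phi t.

Definition main_term (alpha beta : R) (Phi : R -> R) (n : nat) : R :=
  Rpower (INR n) (log2 (alpha + beta)) * Phi (frac (log2 (INR n))).

(* Main.v *)
From Pilot Require Import Defs.
From Stdlib Require Import Reals.
From Coquelicot Require Import Coquelicot.
From Stdlib Require Import Lra Lia ZArith.
Import Pilot.Defs.
Open Scope R_scope.


Definition fl (x : R) : nat := Z.to_nat (Int_part x).

Lemma fl_spec x : 0 <= x -> INR (fl x) <= x < INR (fl x) + 1.
Proof.
  intros Hx. destruct (base_Int_part x) as [H1 H2].
  assert (Hz : (0 <= Int_part x)%Z).
  { assert (IZR (Int_part x) > -1) by lra.
    apply Z.lt_pred_le. apply lt_IZR. simpl. unfold Z.pred. simpl. lra. }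
  unfold fl. rewrite INR_IZR_INZ, Z2Nat.id by exact Hz. lra.
Qed.

Lemma fl_unique m x : INR m <= x < INR m + 1 -> fl x = m.
Proof.
  intros [H1 H2]. unfold fl, Int_part.
  assert (E : (Z.of_nat m + 1)%Z = up x).
  { apply tech_up; rewrite plus_IZR, <- INR_IZR_INZ; simpl; lra. }
  rewrite <- E. replace (Z.of_nat m + 1 - 1)%Z with (Z.of_nat m) by lia.
  apply Nat2Z.id.
Qed.

Lemma fl_INR n : fl (INR n) = n.
Proof. apply fl_unique. lra. Qed.

Lemma fl_double x : 0 <= x -> fl (2 * x) = (2 * fl x)%nat \/ fl (2 * x) = (2 * fl x + 1)%nat.
Proof.
  intros Hx. destruct (fl_spec x Hx) as [H1 H2].
  destruct (Rlt_or_le x (INR (fl x) + /2)).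
  - left. apply fl_unique. rewrite mult_INR. simpl. lra.
  - right. apply fl_unique. rewrite plus_INR, mult_INR. simpl. lra.
Qed.

Lemma fl_ge1 x : 1 <= x -> (1 <= fl x)%nat.
Proof.
  intros Hx. destruct (fl_spec x) as [H1 H2]; [lra|].
  destruct (fl x) eqn:E; [simpl in *; lra | lia].
Qed.

Lemma div2_eq q r : (r < 2)%nat -> ((2*q+r)/2 = q)%nat.
Proof. intros. symmetry. apply Nat.div_unique with r; lia. Qed.

Definition homrec (a b : R) (y : nat -> R) :=
  forall n : nat, (2 <= n)%nat -> y n = a * y (n / 2)%nat + b * y ((n + 1) / 2)%nat.

Lemma y_even a b y m : homrec a b y -> (1 <= m)%nat -> y (2*m)%nat = (a+b) * y m.
Proof.
  intros H Hm. rewrite H by lia.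
  replace (2*m)%nat with (2*m+0)%nat by lia. rewrite div2_eq by lia.
  replace (2*m+0+1)%nat with (2*m+1)%nat by lia. rewrite div2_eq by lia. ring.
Qed.

Lemma y_odd a b y m : homrec a b y -> (1 <= m)%nat ->
  y (2*m+1)%nat = a * y m + b * y (S m).
Proof.
  intros H Hm. rewrite H by lia. rewrite div2_eq by lia.
  replace (2*m+1+1)%nat with (2*(S m)+0)%nat by lia. rewrite div2_eq by lia. ring.
Qed.

Lemma y_pow2 a b y m k : homrec a b y -> (1 <= m)%nat ->
  y (2^k * m)%nat = (a+b)^k * y m.
Proof.
  intros H Hm. induction k.
  - simpl. rewrite Nat.add_0_r. ring.
  - replace (2^S k * m)%nat with (2 * (2^k*m))%nat by (simpl; lia).
    rewrite y_even with (a:=a) (b:=b) by (auto; assert (1 <= 2^k)%nat by (apply Nat.neq_0_lt_0, Nat.pow_nonzero; lia); nia).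
    rewrite IHk. simpl. ring.
Qed.

Definition Dl (y : nat -> R) (m : nat) := y (S m) - y m.

Lemma dlt_bound a b y nu : homrec a b y -> 0 < a -> 0 < b -> a <= nu -> b <= nu -> 1 <= nu ->
  forall j m, (1 <= m)%nat -> (m < 2^(S j))%nat -> Rabs (Dl y m) <= Rabs (Dl y 1) * nu ^ j.
Proof.
  intros H Ha Hb Han Hbn H1n. induction j; intros m Hm1 Hm2.
  - replace m with 1%nat by (simpl in Hm2; lia). simpl. lra.
  - assert (Hpos : 0 <= Rabs (Dl y 1)) by apply Rabs_pos.
    assert (Hp1 : 1 <= nu ^ S j) by (apply pow_R1_Rle; lra).
    destruct (Nat.eq_dec m 1) as [->|Hne].
    + nra.
    + set (q := (m / 2)%nat).
      assert (Hmq : m = (2 * q + m mod 2)%nat) by (apply Nat.div_mod; lia).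
      assert (Hr : (m mod 2 < 2)%nat) by (apply Nat.mod_upper_bound; lia).
      assert (Hq1 : (1 <= q)%nat) by lia.
      assert (Hq2 : (q < 2 ^ S j)%nat) by (simpl in Hm2 |- *; lia).
      specialize (IHj q Hq1 Hq2).
      assert (Hn0 : 0 <= nu ^ j) by (apply pow_le; lra).
      assert (E : Rabs (Dl y m) = a * Rabs (Dl y q) \/ Rabs (Dl y m) = b * Rabs (Dl y q)).
      { destruct (m mod 2) as [|[|r]] eqn:Er; [| |lia].
        - right. rewrite Hmq, Nat.add_0_r. unfold Dl.
          replace (S (2*q)) with (2*q+1)%nat by lia.
          rewrite y_odd with (a:=a) (b:=b), y_even with (a:=a) (b:=b) by auto.
          replace (a * y q + b * y (S q) - (a + b) * y q) with (b * (y (S q) - y q)) by ring.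
          rewrite Rabs_mult, Rabs_pos_eq by lra. reflexivity.
        - left. rewrite Hmq. unfold Dl.
          replace (S (2*q+1)) with (2*(S q))%nat by lia.
          rewrite y_odd with (a:=a) (b:=b), y_even with (a:=a) (b:=b) by (auto; lia).
          replace ((a + b) * y (S q) - (a * y q + b * y (S q))) with (a * (y (S q) - y q)) by ring.
          rewrite Rabs_mult, Rabs_pos_eq by lra. reflexivity. }
      simpl. destruct E as [E|E]; rewrite E;
      (apply Rle_trans with (nu * Rabs (Dl y q));
       [apply Rmult_le_compat_r; [apply Rabs_pos|lra] | nra]).
Qed.

Lemma geo_tel (u : nat -> R) B r e : 0 <= B -> 0 <= r < 1 ->
  (forall k, (e <= k)%nat -> Rabs (u (S k) - u k) <= B * r ^ k) ->
  forall k d, (e <= k)%nat -> Rabs (u (k + d)%nat - u k) <= B * (r ^ k - r ^ (k + d)) / (1 - r).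
Proof.
  intros HB Hr Hs k d Hk. induction d.
  - rewrite Nat.add_0_r. replace (u k - u k) with 0 by ring. rewrite Rabs_R0.
    replace (r^k - r^k) with 0 by ring. unfold Rdiv. rewrite Rmult_0_r, Rmult_0_l. lra.
  - replace (k + S d)%nat with (S (k + d)) by lia.
    replace (u (S (k + d)) - u k) with ((u (S (k+d)) - u (k+d)%nat) + (u (k+d)%nat - u k)) by ring.
    eapply Rle_trans; [apply Rabs_triang|].
    specialize (Hs (k+d)%nat ltac:(lia)).
    replace (B * (r ^ k - r ^ S (k + d)) / (1 - r)) with
      (B * r^(k+d) + B * (r ^ k - r ^ (k + d)) / (1 - r)).
    + lra.
    + simpl. field. lra.
Qed.

Lemma geo_lim (u : nat -> R) B r e : 0 <= B -> 0 <= r < 1 ->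
  (forall k, (e <= k)%nat -> Rabs (u (S k) - u k) <= B * r ^ k) ->
  ex_finite_lim_seq u /\
  forall k, (e <= k)%nat -> Rabs (real (Lim_seq u) - u k) <= B * r ^ k / (1 - r).
Proof.
  intros HB Hr Hs.
  assert (Hb : forall k n, (e <= k)%nat -> (k <= n)%nat -> Rabs (u n - u k) <= B * r ^ k / (1 - r)).
  { intros k n Hk Hn. replace n with (k + (n - k))%nat by lia.
    eapply Rle_trans; [apply (geo_tel u B r e HB Hr Hs k (n-k) Hk)|].
    unfold Rdiv. apply Rmult_le_compat_r; [apply Rlt_le, Rinv_0_lt_compat; lra|].
    apply Rmult_le_compat_l; [lra|]. assert (0 <= r^(k + (n-k))) by (apply pow_le; lra). lra. }
  assert (Hex : ex_finite_lim_seq u).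
  { apply ex_lim_seq_cauchy_corr. intros eps.
    destruct (pow_lt_1_zero r ltac:(rewrite Rabs_pos_eq; lra) (eps * (1 - r) / (2 * (B + 1))))
      as [N HN].
    { apply Rdiv_lt_0_compat; [apply Rmult_lt_0_compat; [apply cond_pos|lra]|lra]. }
    exists (max N e). intros n m Hn Hm.
    set (K := max N e).
    specialize (HN K ltac:(unfold K; lia)). rewrite Rabs_pos_eq in HN by (apply pow_le; lra).
    assert (H1 := Hb K n ltac:(unfold K; lia) Hn). assert (H2 := Hb K m ltac:(unfold K; lia) Hm).
    replace (u n - u m) with ((u n - u K) - (u m - u K)) by ring.
    eapply Rle_lt_trans; [apply Rabs_triang|]. rewrite Rabs_Ropp.
    assert (B * r ^ K / (1 - r) < eps / 2).
    { apply Rle_lt_trans with ((B + 1) * r ^ K / (1 - r)).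
      - unfold Rdiv. apply Rmult_le_compat_r; [apply Rlt_le, Rinv_0_lt_compat; lra|].
        assert (0 <= r^K) by (apply pow_le; lra). nra.
      - assert (0 < eps) by apply cond_pos.
        apply Rmult_lt_reg_r with ((1 - r) * / (B+1)).
        + apply Rmult_lt_0_compat; [lra | apply Rinv_0_lt_compat; lra].
        + replace ((B + 1) * r ^ K / (1 - r) * ((1 - r) * / (B + 1))) with (r ^ K) by (field; lra).
          replace (eps / 2 * ((1 - r) * / (B + 1))) with (eps * (1 - r) / (2 * (B + 1))) by (field; lra).
          exact HN. }
    lra. }
  split; [exact Hex|].
  intros k Hk. destruct Hex as [l Hl].
  rewrite (is_lim_seq_unique _ _ Hl). simpl.
  assert (Hl2 : is_lim_seq (fun n => Rabs (u (n + k)%nat - u k)) (Rabs (l - u k))).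
  { apply (is_lim_seq_abs _ (Finite (l - u k))).
    apply is_lim_seq_minus'; [apply is_lim_seq_incr_n; exact Hl | apply is_lim_seq_const]. }
  assert (Hle := is_lim_seq_le _ (fun _ => B * r ^ k / (1 - r)) _ _
     (fun n => Hb k (n + k)%nat Hk ltac:(lia)) Hl2 (is_lim_seq_const _)).
  simpl in Hle. exact Hle.
Qed.

Definition w (l : R) (y : nat -> R) (k : nat) (t : R) : R := y (fl (2^k * t)) / l^k.
Definition H (l : R) (y : nat -> R) (t : R) : R := real (Lim_seq (fun k => w l y k t)).

Lemma pow_ratio nu l k c : 0 < l -> nu ^ (k + c) / l ^ k = nu ^ c * (nu / l) ^ k.
Proof.
  intros Hl. rewrite pow_add. unfold Rdiv. rewrite Rpow_mult_distr, pow_inv.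
  assert (l ^ k <> 0) by (apply pow_nonzero; lra). field. auto.
Qed.

Lemma w_step a b y nu k t c : homrec a b y -> 0 < a -> 0 < b -> a <= nu -> b <= nu -> 1 <= nu ->
  0 <= t -> (1 <= fl (2^k * t))%nat -> (fl (2^k * t) < 2^(S (k + c)))%nat ->
  Rabs (w (a+b) y (S k) t - w (a+b) y k t) <= Rabs (Dl y 1) * nu ^ c * (nu / (a+b)) ^ k.
Proof.
  intros Hh Ha Hb Han Hbn H1n Ht Hm1 Hm2.
  rewrite Rmult_assoc, <- pow_ratio by lra.
  assert (Hlk : 0 < (a+b)^k) by (apply pow_lt; lra). assert (Hlk2 : (a+b)^k <> 0) by lra.
  assert (Hd := dlt_bound a b y nu Hh Ha Hb Han Hbn H1n (k+c) _ Hm1 Hm2).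
  unfold w. replace (2 ^ S k * t) with (2 * (2^k * t)) by (simpl; ring).
  set (m := fl (2^k*t)) in *.
  assert (0 <= 2^k * t) by (apply Rmult_le_pos; [apply pow_le; lra|lra]).
  destruct (fl_double (2^k*t)) as [E|E]; auto; fold m in E; rewrite E.
  - rewrite y_even with (a:=a) (b:=b) by auto. simpl.
    replace ((a + b) * y m / ((a + b) * (a + b) ^ k) - y m / (a + b) ^ k) with 0 by (field; lra).
    rewrite Rabs_R0. apply Rmult_le_pos; [apply Rabs_pos|]. unfold Rdiv.
    apply Rmult_le_pos; [apply pow_le; lra|apply Rlt_le, Rinv_0_lt_compat; auto].
  - rewrite y_odd with (a:=a) (b:=b) by auto. simpl.
    replace ((a * y m + b * y (S m)) / ((a + b) * (a + b) ^ k) - y m / (a + b) ^ k)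
      with ((b / (a+b)) * (Dl y m / (a+b)^k)) by (unfold Dl; field; lra).
    rewrite Rabs_mult, Rabs_pos_eq by (apply Rlt_le, Rdiv_lt_0_compat; lra).
    unfold Rdiv at 2. rewrite Rabs_mult, (Rabs_pos_eq (/ _)) by (apply Rlt_le, Rinv_0_lt_compat; auto).
    assert (Hbl : b / (a+b) <= 1) by (unfold Rdiv; apply Rmult_le_reg_r with (a+b); [lra|]; rewrite Rmult_assoc, Rinv_l; lra).
    assert (0 <= Rabs (Dl y m) * / (a + b) ^ k) by (apply Rmult_le_pos; [apply Rabs_pos|apply Rlt_le, Rinv_0_lt_compat; auto]).
    apply Rle_trans with (Rabs (Dl y m) * / (a + b) ^ k).
    + assert (0 <= b/(a+b)) by (apply Rlt_le, Rdiv_lt_0_compat; lra). nra.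
    + unfold Rdiv. rewrite <- Rmult_assoc. apply Rmult_le_compat_r; [apply Rlt_le, Rinv_0_lt_compat; auto|]. 
      exact Hd.
Qed.

Lemma dl_over a b y nu k c m : homrec a b y -> 0 < a -> 0 < b -> a <= nu -> b <= nu -> 1 <= nu ->
  (1 <= m)%nat -> (m < 2^(S (k + c)))%nat ->
  Rabs (Dl y m) / (a+b)^k <= Rabs (Dl y 1) * nu ^ c * (nu / (a+b)) ^ k.
Proof.
  intros Hh Ha Hb Han Hbn H1n Hm1 Hm2.
  rewrite Rmult_assoc, <- pow_ratio by lra.
  assert (Hlk : 0 < (a+b)^k) by (apply pow_lt; lra).
  assert (Hd := dlt_bound a b y nu Hh Ha Hb Han Hbn H1n (k+c) _ Hm1 Hm2).
  unfold Rdiv. rewrite <- Rmult_assoc. apply Rmult_le_compat_r; [apply Rlt_le, Rinv_0_lt_compat; auto|]. exact Hd.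
Qed.

Lemma w_nbr a b y nu k t s c : homrec a b y -> 0 < a -> 0 < b -> a <= nu -> b <= nu -> 1 <= nu ->
  0 <= t -> 0 <= s -> Rabs (2^k * t - 2^k * s) < 1 ->
  (1 <= fl (2^k * t))%nat -> (fl (2^k * t) < 2^(S (k + c)))%nat ->
  (1 <= fl (2^k * s))%nat -> (fl (2^k * s) < 2^(S (k + c)))%nat ->
  Rabs (w (a+b) y k t - w (a+b) y k s) <= Rabs (Dl y 1) * nu ^ c * (nu / (a+b)) ^ k.
Proof.
  intros Hh Ha Hb Han Hbn H1n Ht Hs Hts Hm1 Hm2 Hn1 Hn2.
  assert (Hlk : 0 < (a+b)^k) by (apply pow_lt; lra).
  assert (Hp : 0 <= 2^k) by (apply pow_le; lra).
  destruct (fl_spec (2^k*t)) as [A1 A2]; [apply Rmult_le_pos; lra|].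
  destruct (fl_spec (2^k*s)) as [B1 B2]; [apply Rmult_le_pos; lra|].
  unfold w. set (m1 := fl (2^k*t)) in *. set (m2 := fl (2^k*s)) in *.
  apply Rabs_def2 in Hts. destruct Hts as [T1 T2].
  assert (L1 : (m1 < m2 + 2)%nat) by (apply INR_lt; rewrite plus_INR; simpl; lra).
  assert (L2 : (m2 < m1 + 2)%nat) by (apply INR_lt; rewrite plus_INR; simpl; lra).
  assert (Hlk2 : (a+b)^k <> 0) by lra.
  destruct (Nat.eq_dec m1 m2) as [E|NE].
  - rewrite E. replace (y m2 / (a + b) ^ k - y m2 / (a + b) ^ k) with 0 by ring.
    rewrite Rabs_R0. apply Rmult_le_pos; [apply Rmult_le_pos; [apply Rabs_pos|apply pow_le; lra]|].
    apply pow_le. apply Rlt_le, Rdiv_lt_0_compat; lra.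
  - destruct (Nat.lt_ge_cases m1 m2) as [LT|GE].
    + replace m2 with (S m1) by lia.
      replace (y m1 / (a + b) ^ k - y (S m1) / (a + b) ^ k) with (- (Dl y m1 / (a+b)^k)) by (unfold Dl; field; auto).
      rewrite Rabs_Ropp. unfold Rdiv. rewrite Rabs_mult, (Rabs_pos_eq (/ _)) by (apply Rlt_le, Rinv_0_lt_compat; auto).
      apply (dl_over a b y nu k c m1); auto.
    + replace m1 with (S m2) by lia.
      replace (y (S m2) / (a + b) ^ k - y m2 / (a + b) ^ k) with (Dl y m2 / (a+b)^k) by (unfold Dl; field; auto).
      unfold Rdiv. rewrite Rabs_mult, (Rabs_pos_eq (/ _)) by (apply Rlt_le, Rinv_0_lt_compat; auto).
      apply (dl_over a b y nu k c m2); auto.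
Qed.

Lemma exists_pow2 x : exists n : nat, x < 2 ^ n.
Proof.
  destruct (archimed x) as [H1 _].
  exists (Z.to_nat (up x)).
  assert (Hlt := Nat.pow_gt_lin_r 2 (Z.to_nat (up x)) ltac:(lia)).
  apply lt_INR in Hlt. rewrite pow_INR in Hlt. replace (INR 2) with 2 in Hlt by (simpl; lra).
  destruct (Z_lt_le_dec (up x) 0) as [N|P].
  - assert (Z0 : Z.to_nat (up x) = 0%nat) by lia. rewrite Z0. simpl. apply IZR_lt in N. simpl in N. lra.
  - rewrite INR_IZR_INZ, Z2Nat.id in Hlt by lia. lra.
Qed.

Lemma local_good t0 : 0 < t0 -> exists e c : nat, forall t k, t0/2 <= t <= 2*t0 -> (e <= k)%nat ->
  (1 <= fl (2^k * t))%nat /\ (fl (2^k * t) < 2^(S (k + c)))%nat.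
Proof.
  intros Ht0. destruct (exists_pow2 (2 / t0)) as [e He]. destruct (exists_pow2 (2*t0)) as [c Hc].
  exists e, c. intros t k Ht Hk.
  assert (Hke : 2^e <= 2^k) by (apply Rle_pow; [lra|lia]).
  assert (Hpe : 0 < 2^e) by (apply pow_lt; lra).
  assert (X1 : 1 <= 2^k * t).
  { apply Rle_trans with (2^e * (t0/2)).
    - apply Rmult_lt_compat_r with (r := t0/2) in He; [|lra].
      replace (2 / t0 * (t0/2)) with 1 in He by (field; lra). lra.
    - apply Rmult_le_compat; lra. }
  split; [apply fl_ge1; exact X1|].
  destruct (fl_spec (2^k*t)) as [A1 A2]; [lra|].
  apply INR_lt. rewrite pow_INR. replace (INR 2) with 2 by (simpl; lra).
  apply Rle_lt_trans with (2^k * t); [exact A1|].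
  rewrite <- tech_pow_Rmult, pow_add.
  assert (Hpk : 0 < 2^k) by (apply pow_lt; lra).
  assert (2^k * t <= 2^k * (2 * t0)) by (apply Rmult_le_compat_l; lra).
  assert (2^k * (2 * t0) < 2^k * 2^c) by (apply Rmult_lt_compat_l; lra).
  assert (0 < 2^k * 2^c) by (apply Rmult_lt_0_compat; apply pow_lt; lra).
  lra.
Qed.

Definition setting a b y nu := homrec a b y /\ 0 < a /\ 0 < b /\ a <= nu /\ b <= nu /\ 1 <= nu /\ nu < a + b.

Lemma H_local a b y nu t0 : setting a b y nu -> 0 < t0 -> exists e c : nat,
  forall t, t0/2 <= t <= 2*t0 ->
   is_lim_seq (fun k => w (a+b) y k t) (H (a+b) y t) /\
   (forall k, (e <= k)%nat -> Rabs (H (a+b) y t - w (a+b) y k t) <=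
        Rabs (Dl y 1) * nu ^ c * (nu / (a+b)) ^ k / (1 - nu / (a+b))) /\
   (forall k, (e <= k)%nat -> (1 <= fl (2^k * t))%nat /\ (fl (2^k * t) < 2^(S (k + c)))%nat).
Proof.
  intros [Hh [Ha [Hb [Han [Hbn [H1n Hnl]]]]]] Ht0.
  destruct (local_good t0 Ht0) as [e [c Hg]]. exists e, c. intros t Ht.
  assert (Hr : 0 <= nu / (a+b) < 1).
  { split; [apply Rlt_le, Rdiv_lt_0_compat; lra|].
    apply Rmult_lt_reg_r with (a+b); [lra|]. unfold Rdiv. rewrite Rmult_assoc, Rinv_l; lra. }
  assert (HB : 0 <= Rabs (Dl y 1) * nu ^ c) by (apply Rmult_le_pos; [apply Rabs_pos|apply pow_le; lra]).
  destruct (geo_lim (fun k => w (a+b) y k t) _ _ e HB Hr) as [Hex Hbd].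
  { intros k Hk. destruct (Hg t k Ht Hk). rewrite Rmult_assoc.
    rewrite <- Rmult_assoc. apply (w_step a b y nu k t c); auto; lra. }
  split; [|split; [exact Hbd| intros k Hk; apply Hg; auto]].
  unfold H. destruct Hex as [l Hl]. rewrite (is_lim_seq_unique _ _ Hl). exact Hl.
Qed.

Lemma H_cont a b y nu t0 : setting a b y nu -> 0 < t0 -> continuity_pt (H (a+b) y) t0.
Proof.
  intros HS Ht0. destruct (H_local a b y nu t0 HS Ht0) as [e [c Hloc]].
  pose proof HS as [Hh [Ha [Hb [Han [Hbn [H1n Hnl]]]]]].
  set (B := Rabs (Dl y 1) * nu ^ c). set (r := nu / (a+b)).
  assert (Hr : 0 <= r < 1).
  { split; [apply Rlt_le, Rdiv_lt_0_compat; lra|].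
    apply Rmult_lt_reg_r with (a+b); [lra|]. unfold r, Rdiv. rewrite Rmult_assoc, Rinv_l; lra. }
  assert (HB : 0 <= B) by (apply Rmult_le_pos; [apply Rabs_pos|apply pow_le; lra]).
  set (K := B * (2 / (1 - r) + 1)).
  assert (HK : 0 <= K) by (unfold K; apply Rmult_le_pos; [lra|]; assert (0 < 2/(1-r)) by (apply Rdiv_lt_0_compat; lra); lra).
  unfold continuity_pt, continue_in, limit1_in, limit_in. simpl. unfold R_dist.
  intros eps Heps.
  destruct (pow_lt_1_zero r ltac:(rewrite Rabs_pos_eq; lra) (eps / (K + 1))) as [N HN].
  { apply Rdiv_lt_0_compat; lra. }
  set (k := max e N). specialize (HN k ltac:(unfold k; lia)).
  rewrite Rabs_pos_eq in HN by (apply pow_le; lra).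
  assert (Hpk : 0 < 2^k) by (apply pow_lt; lra).
  exists (Rmin (t0/2) (/ 2^k)). split.
  { apply Rmin_pos; [lra|apply Rinv_0_lt_compat; lra]. }
  intros x [_ Hx].
  assert (Hx1 : Rabs (x - t0) < t0/2) by (eapply Rlt_le_trans; [exact Hx|apply Rmin_l]).
  assert (Hx2 : Rabs (x - t0) < / 2^k) by (eapply Rlt_le_trans; [exact Hx|apply Rmin_r]).
  apply Rabs_def2 in Hx1. destruct Hx1 as [Hx1a Hx1b].
  assert (Ix : t0/2 <= x <= 2*t0) by lra.
  assert (It : t0/2 <= t0 <= 2*t0) by lra.
  destruct (Hloc x Ix) as [_ [Tx Gx]]. destruct (Hloc t0 It) as [_ [Tt Gt]].
  assert (Hek : (e <= k)%nat) by (unfold k; lia).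
  specialize (Tx k Hek). specialize (Tt k Hek).
  destruct (Gx k Hek) as [Gx1 Gx2]. destruct (Gt k Hek) as [Gt1 Gt2].
  assert (Hn : Rabs (w (a+b) y k x - w (a+b) y k t0) <= B * r ^ k).
  { apply (w_nbr a b y nu k x t0 c); auto; try lra.
    replace (2^k * x - 2^k * t0) with (2^k * (x - t0)) by ring.
    rewrite Rabs_mult, Rabs_pos_eq by lra.
    apply Rmult_lt_reg_r with (/ 2^k); [apply Rinv_0_lt_compat; lra|].
    replace (2 ^ k * Rabs (x - t0) * / 2 ^ k) with (Rabs (x - t0)) by (field; lra). lra. }
  replace (H (a + b) y x - H (a + b) y t0) with
    ((H (a + b) y x - w (a+b) y k x) + (w (a+b) y k x - w (a+b) y k t0) - (H (a + b) y t0 - w (a+b) y k t0)) by ring.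
  eapply Rle_lt_trans; [apply Rabs_triang|]. rewrite Rabs_Ropp.
  eapply Rle_lt_trans; [apply Rplus_le_compat_r; apply Rabs_triang|].
  fold B r in Tx, Tt.
  assert (E : B * r ^ k / (1 - r) + B * r^k + B * r ^ k / (1 - r) = K * r^k) by (unfold K; field; lra).
  assert (Hrk : 0 <= r^k) by (apply pow_le; lra).
  assert (K * r^k < eps).
  { apply Rle_lt_trans with (K * (eps / (K+1))).
    - apply Rmult_le_compat_l; lra.
    - apply Rmult_lt_reg_r with (K+1); [lra|].
      replace (K * (eps / (K + 1)) * (K + 1)) with (K * eps) by (field; lra). nra. }
  lra.
Qed.

Lemma H_double a b y nu t : setting a b y nu -> 0 < t -> H (a+b) y (2 * t) = (a+b) * H (a+b) y t.
Proof.
  intros HS Ht. destruct (H_local a b y nu t HS Ht) as [e [c Hloc]].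
  destruct (Hloc t ltac:(lra)) as [Hl _].
  pose proof HS as [Hh [Ha [Hb _]]].
  assert (E : forall k, w (a+b) y k (2*t) = (a+b) * w (a+b) y (S k) t).
  { intros k. unfold w. replace (2^k * (2*t)) with (2^S k * t) by (simpl; ring).
    assert ((a+b)^k <> 0) by (apply pow_nonzero; lra). simpl. field. split; auto; lra. }
  apply is_lim_seq_incr_1 in Hl.
  apply (is_lim_seq_scal_l _ (a+b)) in Hl.
  unfold H at 1. rewrite (Lim_seq_ext _ _ E). rewrite (is_lim_seq_unique _ _ Hl). reflexivity.
Qed.

Lemma H_nat a b y n : homrec a b y -> 0 < a + b -> (1 <= n)%nat -> H (a+b) y (INR n) = y n.
Proof.
  intros Hh Hab Hn. unfold H.
  assert (E : forall k, w (a+b) y k (INR n) = y n).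
  { intros k. unfold w.
    replace (2^k * INR n) with (INR (2^k * n)) by (rewrite mult_INR, pow_INR; simpl; f_equal; f_equal; lra).
    rewrite fl_INR. rewrite (y_pow2 a b y n k Hh Hn). field. apply pow_nonzero; lra. }
  rewrite (Lim_seq_ext _ _ E), Lim_seq_const. reflexivity.
Qed.

Lemma cont_rpow x s : continuity_pt (fun s => Rpower x s) s.
Proof.
  unfold Rpower. apply derivable_continuous_pt.
  apply (derivable_pt_comp (fun s => s * ln x) exp).
  - apply (derivable_pt_mult id (fct_cte (ln x))); [apply derivable_pt_id|apply derivable_pt_const].
  - apply derivable_pt_exp.
Qed.

Lemma Rpower_pos x s : 0 < Rpower x s.
Proof. unfold Rpower. apply exp_pos. Qed.

Lemma periodic_int (Phi : R -> R) : (forall t, Phi (t + 1) = Phi t) ->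
  forall s z, Phi (s + IZR z) = Phi s.
Proof.
  intros Hp.
  assert (Hn : forall n s, Phi (s + INR n) = Phi s).
  { induction n; intros s. - simpl. rewrite Rplus_0_r. reflexivity.
    - rewrite S_INR. replace (s + (INR n + 1)) with ((s + INR n) + 1) by ring. rewrite Hp. apply IHn. }
  intros s z. destruct z as [|p|p].
  - simpl. rewrite Rplus_0_r. reflexivity.
  - rewrite <- positive_nat_Z, <- INR_IZR_INZ. apply Hn.
  - replace (IZR (Z.neg p)) with (- INR (Pos.to_nat p)).
    + rewrite <- (Hn (Pos.to_nat p) (s + - INR (Pos.to_nat p))).
      f_equal. ring.
    + rewrite <- Pos2Z.opp_pos, opp_IZR, <- positive_nat_Z, <- INR_IZR_INZ. reflexivity.
Qed.

Lemma key a b y : homrec a b y -> 0 < a -> 0 < b -> 1 < a + b ->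
  exists Phi, periodic1_continuous Phi /\ forall n, (1 <= n)%nat -> y n = main_term a b Phi n.
Proof.
  intros Hh Ha Hb Hl.
  set (nu := Rmax (Rmax a b) 1).
  assert (HS : setting a b y nu).
  { unfold setting, nu. repeat split; auto.
    - apply Rle_trans with (Rmax a b); [apply Rmax_l|apply Rmax_l].
    - apply Rle_trans with (Rmax a b); [apply Rmax_r|apply Rmax_l].
    - apply Rmax_r.
    - apply Rmax_lub_lt; [apply Rmax_lub_lt|]; lra. }
  set (l := a + b).
  exists (fun s => H l y (Rpower 2 s) / Rpower l s).
  split; [split|].
  - intros s.
    apply (continuity_pt_div (fun s => H l y (Rpower 2 s)) (fun s => Rpower l s)).
    + apply (continuity_pt_comp (fun s => Rpower 2 s) (H l y)); [apply cont_rpow|].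
      apply (H_cont a b y nu); auto. apply Rpower_pos.
    + apply cont_rpow.
    + assert (0 < Rpower l s) by apply Rpower_pos. lra.
  - intros s. rewrite !Rpower_plus, !Rpower_1 by (unfold l; lra).
    rewrite Rmult_comm. unfold l. rewrite (H_double a b y nu) by (auto; apply Rpower_pos).
    assert (0 < Rpower (a+b) s) by apply Rpower_pos. field. lra.
  - intros n Hn.
    assert (HnR : 0 < INR n) by (apply lt_0_INR; lia).
    unfold main_term, frac, frac_part.
    assert (Hper := periodic_int (fun s => H l y (Rpower 2 s) / Rpower l s)).
    assert (Hp1 : forall t, (fun s => H l y (Rpower 2 s) / Rpower l s) (t+1) = (fun s => H l y (Rpower 2 s) / Rpower l s) t).
    { intros t. simpl. rewrite !Rpower_plus, !Rpower_1 by (unfold l; lra).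
         rewrite Rmult_comm. unfold l. rewrite (H_double a b y nu) by (auto; apply Rpower_pos).
         assert (0 < Rpower (a+b) t) by apply Rpower_pos. field. lra. }
    specialize (Hper Hp1). simpl in Hper.
    replace (log2 (INR n) - IZR (Int_part (log2 (INR n)))) with (log2 (INR n) + IZR (- Int_part (log2 (INR n)))) by (rewrite opp_IZR; ring).
    rewrite Hper.
    assert (Hln2 : 0 < ln 2) by (rewrite <- ln_1; apply ln_increasing; lra).
    assert (E1 : Rpower 2 (log2 (INR n)) = INR n).
    { unfold Rpower, log2. replace (ln (INR n) / ln 2 * ln 2) with (ln (INR n)) by (field; lra).
      apply exp_ln; auto. }
    assert (E2 : Rpower l (log2 (INR n)) = Rpower (INR n) (log2 (a+b))).
    { unfold Rpower, log2, l. f_equal. field. lra. }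
    rewrite E1, E2. unfold l. rewrite (H_nat a b y n) by (auto; lra).
    assert (0 < Rpower (INR n) (log2 (a + b))) by apply Rpower_pos. field. lra.
Qed.

Lemma growth alpha beta c0 (x : nat -> R) M c :
  0 < alpha -> 0 < beta -> alpha + beta <= 1 ->
  (forall n : nat, (2 <= n)%nat -> x n = alpha * x (n / 2)%nat + beta * x ((n + 1) / 2)%nat + c0) ->
  Rabs (x 1%nat) <= M -> 0 <= M -> 0 <= c -> (alpha + beta) * M + Rabs c0 <= M + c ->
  forall j n, (1 <= n)%nat -> (n <= 2^j)%nat -> Rabs (x n) <= M + INR j * c.
Proof.
  intros Ha Hb Hl Hrec HM1 HM0 Hc Hstep. induction j; intros n Hn1 Hn2.
  - replace n with 1%nat by (simpl in Hn2; lia). simpl. lra.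
  - rewrite S_INR. assert (0 <= INR j) by apply pos_INR.
    assert (0 <= INR j * c) by (apply Rmult_le_pos; lra).
    destruct (Nat.eq_dec n 1) as [->|Hne]; [lra|].
    assert (Hq : exists q r, (r < 2)%nat /\ n = (2*q + r)%nat) by
      (exists (n/2)%nat, (n mod 2)%nat; split; [apply Nat.mod_upper_bound; lia| apply Nat.div_mod; lia]).
    destruct Hq as [q [r [Hr Hn]]].
    assert (E1 : (n / 2 = q)%nat) by (rewrite Hn; apply div2_eq; lia).
    assert (E2 : ((n + 1) / 2 = q + r)%nat).
    { rewrite Hn. destruct r as [|[|]]; [| |lia].
      - symmetry. apply Nat.div_unique with 1%nat; lia.
      - symmetry. apply Nat.div_unique with 0%nat; lia. }
    assert (Hp : (2 ^ S j = 2 * 2 ^ j)%nat) by (simpl; lia).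
    assert (B1 := IHj q ltac:(lia) ltac:(lia)).
    assert (B2 := IHj (q + r)%nat ltac:(lia) ltac:(lia)).
    rewrite Hrec by lia. rewrite E1, E2.
    eapply Rle_trans; [apply Rabs_triang|].
    eapply Rle_trans; [apply Rplus_le_compat_r; apply Rabs_triang|].
    rewrite !Rabs_mult, (Rabs_pos_eq alpha), (Rabs_pos_eq beta) by lra.
    assert (alpha * Rabs (x q) <= alpha * (M + INR j * c)) by (apply Rmult_le_compat_l; lra).
    assert (beta * Rabs (x (q+r)%nat) <= beta * (M + INR j * c)) by (apply Rmult_le_compat_l; lra).
    assert ((alpha + beta) * (INR j * c) <= INR j * c) by nra.
    nra.
Qed.

Lemma ln_le_mono u v : 0 < u -> u <= v -> ln u <= ln v.
Proof. intros Hu Huv. destruct (Req_dec u v) as [->|N]; [lra|]. left. apply ln_increasing; lra. Qed.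

Lemma ln_ge1 n : (3 <= n)%nat -> 1 <= ln (INR n).
Proof.
  intros Hn. rewrite <- (ln_exp 1). apply ln_le_mono; [apply exp_pos|].
  assert (3 <= INR n) by (replace 3 with (INR 3) by (simpl; lra); apply le_INR; lia).
  assert (H3 := exp_le_3). lra.
Qed.

Lemma zero_sol alpha beta (x : nat -> R) :
  (forall n : nat, (2 <= n)%nat -> x n = alpha * x (n / 2)%nat + beta * x ((n + 1) / 2)%nat + 0) ->
  x 1%nat = 0 -> forall n, (1 <= n)%nat -> x n = 0.
Proof.
  intros Hrec H1 n. induction n as [n IH] using (well_founded_induction lt_wf). intros Hn.
  destruct (Nat.eq_dec n 1) as [->|Hne]; auto.
  rewrite Hrec by lia.
  assert (Hq : exists q r, (r < 2)%nat /\ n = (2*q + r)%nat) by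
      (exists (n/2)%nat, (n mod 2)%nat; split; [apply Nat.mod_upper_bound; lia| apply Nat.div_mod; lia]).
  destruct Hq as [q [r [Hr Hn']]].
  assert (E1 : (n / 2 = q)%nat) by (rewrite Hn'; apply div2_eq; lia).
  assert (E2 : ((n + 1) / 2 = q + r)%nat).
  { rewrite Hn'. destruct r as [|[|]]; [| |lia].
    - symmetry. apply Nat.div_unique with 1%nat; lia.
    - symmetry. apply Nat.div_unique with 0%nat; lia. }
  rewrite E1, E2, (IH q), (IH (q+r)%nat) by lia. ring.
Qed.

Theorem mainTheorem5 (alpha beta c0 : R) (x : nat -> R)
  (Halpha : 0 < alpha) (Hbeta : 0 < beta)
  (Hrec : forall n : nat, (2 <= n)%nat ->
      x n = alpha * x (n / 2)%nat + beta * x ((n + 1) / 2)%nat + c0) :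
  let d0 := (1 - beta) * x 1%nat - c0 + c0 in
  let d1 := c0 - (1 - beta) * x 1%nat in
  (* (1) *)
  (d0 = 0 /\ d1 = 0 ->
     exists Phi : R -> R, periodic1_continuous Phi /\
       eventually_nat (fun n => x n = main_term alpha beta Phi n)) /\
  (* (2a) *)
  ((d0 <> 0 \/ d1 <> 0) -> alpha + beta > 1 ->
     exists Phi : R -> R, periodic1_continuous Phi /\
       forall eps : R, eps > 0 ->
         bigO (fun n => x n - main_term alpha beta Phi n)
              (fun n => Rpower (INR n)
                          (log2 (Rmax (Rmax alpha beta) 1)
                           + iverson (Rmax alpha beta = 1) * eps)
                        * ivpow (ln (INR n)) (Rmax alpha beta < 1))) /\
  (* (2b) *)
  ((d0 <> 0 \/ d1 <> 0) -> alpha + beta <= 1 ->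
     bigO x (fun n => ivpow (ln (INR n)) (alpha + beta = 1 /\ d0 + d1 <> 0))).
Proof.
  intros d0 d1.
  assert (Hsum : d0 + d1 = c0) by (unfold d0, d1; ring).
  assert (Hln2 : 0 < ln 2) by (rewrite <- ln_1; apply ln_increasing; lra).
  split; [|split].
  -
    intros [H0 H1].
    assert (Hc0 : c0 = 0) by lra.
    assert (Hx1 : (1 - beta) * x 1%nat = 0) by (unfold d0 in H0; lra).
    rewrite Hc0 in Hrec.
    destruct (Rlt_or_le 1 (alpha + beta)) as [Hl|Hl].
    + destruct (key alpha beta x) as [Phi [HP Hm]]; auto.
      { intros n Hn. rewrite Hrec by auto. ring. }
      exists Phi. split; auto. exists 1%nat. intros n Hn. apply Hm. lia.
    + assert (Hx : x 1%nat = 0).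
      { destruct (Rmult_integral _ _ Hx1); [lra|auto]. }
      exists (fun _ => 0). split.
      * split; [intros s; apply continuity_pt_const; intros u v; reflexivity|reflexivity].
      * exists 1%nat. intros n Hn. unfold main_term. rewrite Rmult_0_r.
        apply (zero_sol alpha beta x Hrec Hx n Hn).
  -
    intros _ Hl.
    set (K := c0 / (alpha + beta - 1)).
    destruct (key alpha beta (fun n => x n + K)) as [Phi [HP Hm]]; auto.
    { intros n Hn. cbv beta. rewrite Hrec by auto. unfold K. field. lra. }
    exists Phi. split; auto. intros eps Heps.
    exists (Rabs K), 3%nat. intros n Hn.
    replace (x n - main_term alpha beta Phi n) with (- K) by (rewrite <- Hm by lia; ring).
    rewrite Rabs_Ropp.
    set (m := Rmax (Rmax alpha beta) 1).
    assert (Hm1 : 1 <= m) by apply Rmax_r.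
    assert (Hlogm : 0 <= log2 m).
    { unfold log2. apply Rmult_le_pos; [|apply Rlt_le, Rinv_0_lt_compat; auto].
      rewrite <- ln_1. apply ln_le_mono; lra. }
    assert (Hiv : 0 <= iverson (Rmax alpha beta = 1)) by
      (unfold iverson; destruct excluded_middle_informative; lra).
    assert (HnR : 3 <= INR n) by (replace 3 with (INR 3) by (simpl; lra); apply le_INR; lia).
    assert (Hlnn := ln_ge1 n Hn).
    assert (Hpw : 1 <= Rpower (INR n) (log2 m + iverson (Rmax alpha beta = 1) * eps)).
    { unfold Rpower. apply Rle_trans with (exp 0); [rewrite exp_0; lra|].
      assert (HH : 0 <= (log2 m + iverson (Rmax alpha beta = 1) * eps) * ln (INR n)).
      { apply Rmult_le_pos; [|lra]. assert (0 <= iverson (Rmax alpha beta = 1) * eps) by (apply Rmult_le_pos; lra). lra. }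
      destruct HH as [HH|HH]; [left; apply exp_increasing; auto| rewrite <- HH; lra]. }
    assert (Hiv2 : 1 <= ivpow (ln (INR n)) (Rmax alpha beta < 1)) by
      (unfold ivpow; destruct excluded_middle_informative; lra).
    rewrite (Rabs_pos_eq (Rpower _ _ * _)) by nra.
    assert (0 <= Rabs K) by apply Rabs_pos.
    assert (1 <= Rpower (INR n) (log2 m + iverson (Rmax alpha beta = 1) * eps) * ivpow (ln (INR n)) (Rmax alpha beta < 1)) by nra.
    nra.
  -
    intros _ Hl. rewrite Hsum.
    unfold bigO, ivpow. destruct excluded_middle_informative as [[Hl1 Hc]|NP].
    + set (M := Rabs (x 1%nat)). set (c := Rabs c0).
      assert (G := growth alpha beta c0 x M c Halpha Hbeta Hl Hrec ltac:(unfold M; lra)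
                    ltac:(apply Rabs_pos) ltac:(apply Rabs_pos) ltac:(rewrite Hl1; unfold c; lra)).
      exists (M + c / ln 2 + c), 3%nat. intros n Hn.
      assert (Hlnn := ln_ge1 n Hn).
      rewrite (Rabs_pos_eq (ln (INR n))) by lra.
      destruct (Nat.log2_up_spec n ltac:(lia)) as [S1 S2].
      set (j := Nat.log2_up n) in *.
      assert (Hj : j = S (Nat.pred j)).
      { destruct j; [simpl in S2; lia|reflexivity]. }
      assert (Gn := G j n ltac:(lia) S2).
      assert (Hjb : INR (Nat.pred j) * ln 2 < ln (INR n)).
      { rewrite <- ln_pow by lra. apply ln_increasing; [apply pow_lt; lra|].
        replace 2 with (INR 2) at 1 by (simpl; lra). rewrite <- pow_INR. apply lt_INR. exact S1. }
      assert (HjR : INR j = INR (Nat.pred j) + 1) by (rewrite Hj at 1; apply S_INR).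
      assert (Hc0 : 0 <= c) by apply Rabs_pos. assert (HM0 : 0 <= M) by apply Rabs_pos.
      assert (INR (Nat.pred j) <= ln (INR n) / ln 2).
      { apply Rmult_le_reg_r with (ln 2); auto. unfold Rdiv. rewrite Rmult_assoc, Rinv_l; lra. }
      assert (INR j * c <= (ln (INR n) / ln 2 + 1) * c) by (apply Rmult_le_compat_r; lra).
      assert (0 <= c / ln 2) by (apply Rmult_le_pos; [lra|apply Rlt_le, Rinv_0_lt_compat; auto]).
      assert (E : (ln (INR n) / ln 2 + 1) * c = (c / ln 2) * ln (INR n) + c) by (field; lra).
      nra.
    + set (lam := alpha + beta).
      assert (Hcase : lam < 1 \/ c0 = 0).
      { destruct (Req_dec c0 0); [right; auto|left].
        destruct Hl as [Hl|Hl]; [exact Hl|exfalso; apply NP; split; auto]. }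
      set (M := Rmax (Rabs (x 1%nat)) (Rabs c0 / (1 - lam))).
      assert (HM : Rabs (x 1%nat) <= M /\ 0 <= M /\ lam * M + Rabs c0 <= M + 0).
      { destruct Hcase as [Hlt|Hc].
        - unfold M. split; [apply Rmax_l|split].
          + apply Rle_trans with (Rabs (x 1%nat)); [apply Rabs_pos|apply Rmax_l].
          + assert (Hq : Rabs c0 / (1 - lam) <= Rmax (Rabs (x 1%nat)) (Rabs c0 / (1 - lam))) by apply Rmax_r.
            assert (Rabs c0 <= (1 - lam) * Rmax (Rabs (x 1%nat)) (Rabs c0 / (1 - lam))).
            { apply Rmult_le_compat_l with (r := 1 - lam) in Hq; [|lra].
              replace ((1 - lam) * (Rabs c0 / (1 - lam))) with (Rabs c0) in Hq by (field; lra). exact Hq. }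
            lra.
        - unfold M. rewrite Hc, Rabs_R0.
          assert (0 <= Rabs (x 1%nat)) by apply Rabs_pos.
          assert (Rabs (x 1%nat) <= Rmax (Rabs (x 1%nat)) (0 / (1 - lam))) by apply Rmax_l.
          split; [lra|split]; [lra|].
          assert (0 <= Rmax (Rabs (x 1%nat)) (0 / (1 - lam))) by lra. assert (lam <= 1) by (unfold lam; lra). nra. }
      destruct HM as [HM1 [HM0 HM2]].
      assert (G := growth alpha beta c0 x M 0 Halpha Hbeta Hl Hrec HM1 HM0 ltac:(lra) HM2).
      exists M, 1%nat. intros n Hn. rewrite Rabs_R1, Rmult_1_r.
      assert (Hnn : (n < 2^n)%nat) by (apply Nat.pow_gt_lin_r; lia).
      assert (Gn := G n n Hn ltac:(lia)). rewrite Rmult_0_r, Rplus_0_r in Gn. exact Gn.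
Qed.
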